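(* The forgetful functor $U:\mathbf{Exp}\to\omega\mathbf{Cat}$ admits a left adjoint.
   Context: All $\omega$-categories are strict and globular; $\omega\mathbf{Cat}$ is the category of strict $\omega$-categories and strict $\omega$-functors. For an $n$-cell $x$ and $i\le n$, $s_i(x),t_i(x)$ are its iterated $i$-dimensional source and target ($s_n(x)=t_n(x)=x$, $s(x)=s_{n-1}(x)$, $t(x)=t_{n-1}(x)$). $y\star_p x$ is the $p$-composite (defined when $t_p(x)=s_p(y)$), $1_u$ the identity on $u$; lower-dimensional cells in composites stand for their iterated identities; composites are bracketed giving priority to the lowest-dimensional composition ($z\star_p y\star_q x=(z\star_p y)\star_q x$ if $p\le q$, $z\star_p(y\star_q x)$ if $p\ge q$). An expansion on an $\omega$-category $C$ consists of a $0$-cell $o$ (the origin) and, for each $n$-cell $x$ of $C$, an $(n+1)$-cell $\xi_x$ with $\xi_x:o\to x$ if $n=0$ and $\xi_x:\xi_{t(x)}\to x\star_0\xi_{s_0(x)}\star_1\cdots\star_{n-1}\xi_{s_{n-1}(x)}$ if $n>0$, such that for all $n>p$, all $n$-cells $x,y$ with $t_p(x)=s_p(y)$ and all cells $u$: $\xi_{y\star_p x}=t_{p+1}(y)\star_0\xi_{s_0(x)}\star_1\cdots\star_{p-1}\xi_{s_{p-1}(x)}\star_p\xi_x\star_{p+1}\xi_y$, $\xi_{1_u}=1_{\xi_u}$, $\xi_{\xi_u}=1_{\xi_u}$, and $\xi_o=1_o$. (Equivalently: an oplax transformation from the constant $\omega$-functor at $o$ to the identity of $C$ with these degeneracy conditions.)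 $\mathbf{Exp}$ is the category whose objects are $\omega$-categories with an expansion $(C,o,\xi)$ and whose morphisms are $\omega$-functors $f$ with $f(o)=o$ and $f(\xi_x)=\xi_{f(x)}$ for every cell $x$; $U$ forgets the expansion. *)

(* Defs.v *)
From mathcomp Require Import ssreflect ssrfun ssrbool eqtype ssrnat.

Set Implicit Arguments.
Unset Strict Implicit.
Unset Printing Implicit Defensive.

(* A globular set with identities and compositions, presented as the
   disjoint union of the sets of n-cells graded by [dim].  [src]/[tgt]
   are meaningful on cells of positive dimension only; [comp p y x]
   (= y *_p x) is meaningful only when x, y are p-composable. *)
Record wdata := WData {
  cell : Type;
  dim : cell -> nat;
  src : cell -> cell;
  tgt : cell -> cell;
  idc : cell -> cell;
  comp : nat -> cell -> cell -> cell
}.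

Section Ops.
Variable C : wdata.

Definition sI (i : nat) (x : cell C) : cell C := iter (dim x - i) (@src C) x.
Definition tI (i : nat) (x : cell C) : cell C := iter (dim x - i) (@tgt C) x.

Definition idn (n : nat) (u : cell C) : cell C := iter (n - dim u) (@idc C) u.

Definition composable (p : nat) (x y : cell C) : Prop :=
  dim x = dim y /\ p < dim x /\ tI p x = sI p y.

Definition is_wcat : Prop :=
  (forall x : cell C, 0 < dim x -> dim (src x) = (dim x).-1 /\ dim (tgt x) = (dim x).-1) /\
  (forall x : cell C, 1 < dim x -> src (src x) = src (tgt x) /\ tgt (src x) = tgt (tgt x)) /\
  (forall u : cell C, dim (idc u) = (dim u).+1 /\ src (idc u) = u /\ tgt (idc u) = u) /\
  (forall p x y, composable p x y -> dim (comp p y x) = dim x) /\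
  (forall p x y, composable p x y -> dim x = p.+1 ->
      src (comp p y x) = src x /\ tgt (comp p y x) = tgt y) /\
  (forall p x y, composable p x y -> p.+1 < dim x ->
      src (comp p y x) = comp p (src y) (src x) /\
      tgt (comp p y x) = comp p (tgt y) (tgt x)) /\
  (forall p x, p < dim x ->
      comp p x (idn (dim x) (sI p x)) = x /\
      comp p (idn (dim x) (tI p x)) x = x) /\
  (forall p x y z, composable p x y -> composable p y z ->
      comp p z (comp p y x) = comp p (comp p z y) x) /\
  (forall p q x x' y y', p < q ->
      composable q x x' -> composable q y y' ->
      composable p x y -> composable p x' y' ->
      comp p (comp q y' y) (comp q x' x) = comp q (comp p y' x') (comp p y x)) /\
  (forall p x y, composable p x y -> idc (comp p y x) = comp p (idc y) (idc x)).

End Ops.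

Record wcat := WCat { wd :> wdata; wcat_ax : is_wcat wd }.

Definition is_wfunctor (C D : wdata) (f : cell C -> cell D) : Prop :=
  (forall x, dim (f x) = dim x) /\
  (forall x, 0 < dim x -> f (src x) = src (f x) /\ f (tgt x) = tgt (f x)) /\
  (forall u, f (idc u) = idc (f u)) /\
  (forall p x y, composable p x y -> f (comp p y x) = comp p (f y) (f x)).

Record wfunctor (C D : wcat) := WFun {
  wfun :> cell C -> cell D;
  wfun_ax : is_wfunctor wfun }.

Section Expansion.
Variable C : wdata.
Variables (o : cell C) (xi : cell C -> cell C).

(* whisk N c x k = c *_0 xi_{s_0 x} *_1 ... *_{k-1} xi_{s_{k-1} x}
   (left-bracketed, every cell padded by identities to dimension N) *)
Fixpoint whisk (N : nat) (c x : cell C) (k : nat) : cell C :=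
  match k with
  | 0 => idn N c
  | k'.+1 => comp k' (whisk N c x k') (idn N (xi (sI k' x)))
  end.

Definition is_expansion : Prop :=
  dim o = 0 /\
  (forall x, dim (xi x) = (dim x).+1) /\
  (forall x, dim x = 0 -> src (xi x) = o /\ tgt (xi x) = x) /\
  (forall x, 0 < dim x ->
      src (xi x) = xi (tgt x) /\ tgt (xi x) = whisk (dim x) x x (dim x)) /\
  (forall p x y, composable p x y ->
      xi (comp p y x) =
      comp p.+1 (comp p (whisk (dim x).+1 (tI p.+1 y) x p) (xi x)) (xi y)) /\
  (forall u, xi (idc u) = idc (xi u)) /\
  (forall u, xi (xi u) = idc (xi u)) /\
  xi o = idc o.

End Expansion.

Record expansion := Expansion {
  ecat :> wcat;
  orig : cell ecat;
  xi : cell ecat -> cell ecat;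
  exp_ax : is_expansion orig xi }.

Definition U (E : expansion) : wcat := ecat E.

Record expmor (E F : expansion) := ExpMor {
  emor :> wfunctor (U E) (U F);
  emor_orig : emor (orig E) = orig F;
  emor_xi : forall x, emor (xi x) = xi (emor x) }.

(* Main.v *)
Require Import Defs.
From mathcomp Require Import ssreflect ssrfun ssrbool eqtype ssrnat zify.
From Stdlib Require Import ClassicalEpsilon ProofIrrelevance FunctionalExtensionality PropExtensionality.
Require Import Defs.

Set Implicit Arguments.
Unset Strict Implicit.
Unset Printing Implicit Defensive.

Section Gen.
Variable D : wdata.
Hypothesis HD : is_wcat D.

Lemma ax1 (x : cell D) : 0 < dim x -> dim (src x) = (dim x).-1 /\ dim (tgt x) = (dim x).-1.
Proof. by case: HD => H _; apply: H. Qed.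
Lemma ax2 (x : cell D) : 1 < dim x -> src (src x) = src (tgt x) /\ tgt (src x) = tgt (tgt x).
Proof. by case: HD => _ [H _]; apply: H. Qed.
Lemma ax3 (u : cell D) : dim (idc u) = (dim u).+1 /\ src (idc u) = u /\ tgt (idc u) = u.
Proof. by case: HD => _ [_ [H _]]; apply: H. Qed.
Lemma ax4 p (x y : cell D) : composable p x y -> dim (comp p y x) = dim x.
Proof. by case: HD => _ [_ [_ [H _]]]; apply: H. Qed.
Lemma ax5 p (x y : cell D) : composable p x y -> dim x = p.+1 ->
      src (comp p y x) = src x /\ tgt (comp p y x) = tgt y.
Proof. by case: HD => _ [_ [_ [_ [H _]]]]; apply: H. Qed.
Lemma ax6 p (x y : cell D) : composable p x y -> p.+1 < dim x ->
      src (comp p y x) = comp p (src y) (src x) /\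
      tgt (comp p y x) = comp p (tgt y) (tgt x).
Proof. by case: HD => _ [_ [_ [_ [_ [H _]]]]]; apply: H. Qed.

Lemma ax7 p (x : cell D) : p < dim x ->
      comp p x (idn (dim x) (sI p x)) = x /\ comp p (idn (dim x) (tI p x)) x = x.
Proof. by case: HD => _ [_ [_ [_ [_ [_ [H _]]]]]]; apply: H. Qed.
Lemma ax8 p (x y z : cell D) : composable p x y -> composable p y z ->
      comp p z (comp p y x) = comp p (comp p z y) x.
Proof. by case: HD => _ [_ [_ [_ [_ [_ [_ [H _]]]]]]]; apply: H. Qed.
Lemma ax9 p q (x x' y y' : cell D) : p < q ->
      composable q x x' -> composable q y y' ->
      composable p x y -> composable p x' y' ->
      comp p (comp q y' y) (comp q x' x) = comp q (comp p y' x') (comp p y x).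
Proof. by case: HD => _ [_ [_ [_ [_ [_ [_ [_ [H _]]]]]]]]; apply: H. Qed.
Lemma ax10 p (x y : cell D) : composable p x y -> idc (comp p y x) = comp p (idc y) (idc x).
Proof. by case: HD => _ [_ [_ [_ [_ [_ [_ [_ [_ H]]]]]]]]; apply: H. Qed.

Lemma dim_src (x : cell D) : 0 < dim x -> dim (src x) = (dim x).-1.
Proof. by move=> h; case: (ax1 h). Qed.
Lemma dim_tgt (x : cell D) : 0 < dim x -> dim (tgt x) = (dim x).-1.
Proof. by move=> h; case: (ax1 h). Qed.

Lemma dim_iter_src k (x : cell D) : k <= dim x -> dim (iter k (@src D) x) = dim x - k.
Proof.
elim: k => [|k IH] Hk /=; first by rewrite subn0.
have H1 := IH (ltnW Hk). rewrite dim_src H1; lia.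
Qed.
Lemma dim_iter_tgt k (x : cell D) : k <= dim x -> dim (iter k (@tgt D) x) = dim x - k.
Proof.
elim: k => [|k IH] Hk /=; first by rewrite subn0.
have H1 := IH (ltnW Hk). rewrite dim_tgt H1; lia.
Qed.
Lemma dim_sI i (x : cell D) : i <= dim x -> dim (sI i x) = i.
Proof. move=> h; rewrite /sI dim_iter_src; lia. Qed.
Lemma dim_tI i (x : cell D) : i <= dim x -> dim (tI i x) = i.
Proof. move=> h; rewrite /tI dim_iter_tgt; lia. Qed.
Lemma dim_iter_idc k (u : cell D) : dim (iter k (@idc D) u) = dim u + k.
Proof. elim: k => [|k IH] /=; [by rewrite addn0 | rewrite (ax3 _).1 IH; lia]. Qed.
Lemma dim_idn n (u : cell D) : dim u <= n -> dim (idn n u) = n.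
Proof. move=> h; rewrite /idn dim_iter_idc; lia. Qed.

Lemma iter_src_idc a b (u : cell D) : iter a (@src D) (iter (a + b) (@idc D) u) = iter b (@idc D) u.
Proof.
elim: a => [|a IH] //. by rewrite iterSr addSn iterS (ax3 _).2.1 IH.
Qed.
Lemma iter_tgt_idc a b (u : cell D) : iter a (@tgt D) (iter (a + b) (@idc D) u) = iter b (@idc D) u.
Proof.
elim: a => [|a IH] //. by rewrite iterSr addSn iterS (ax3 _).2.2 IH.
Qed.

Lemma sI_small i (x : cell D) : dim x <= i -> sI i x = x.
Proof. by move=> h; rewrite /sI (_ : dim x - i = 0) //; lia. Qed.
Lemma tI_small i (x : cell D) : dim x <= i -> tI i x = x.
Proof. by move=> h; rewrite /tI (_ : dim x - i = 0) //; lia. Qed.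
Lemma idn_small n (x : cell D) : n <= dim x -> idn n x = x.
Proof. by move=> h; rewrite /idn (_ : n - dim x = 0) //; lia. Qed.

Lemma sI_idn j N (u : cell D) : dim u <= N -> j <= N -> sI j (idn N u) = idn j (sI j u).
Proof.
move=> h1 h2; rewrite /sI dim_idn // /idn.
case: (leqP (dim u) j) => h3.
  rewrite (_ : dim u - j = 0) /=; last lia.
  by rewrite (_ : N - dim u = (N - j) + (j - dim u)) ?iter_src_idc //; lia.
rewrite dim_iter_src; last lia.
rewrite (_ : j - (dim u - (dim u - j)) = 0) /=; last lia.
rewrite (_ : N - j = (dim u - j) + (N - dim u)); last lia.
rewrite iterD -{2}(addn0 (N - dim u)) iter_src_idc //.
Qed.

Lemma tI_idn j N (u : cell D) : dim u <= N -> j <= N -> tI j (idn N u) = idn j (tI j u).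
Proof.
move=> h1 h2; rewrite /tI dim_idn // /idn.
case: (leqP (dim u) j) => h3.
  rewrite (_ : dim u - j = 0) /=; last lia.
  by rewrite (_ : N - dim u = (N - j) + (j - dim u)) ?iter_tgt_idc //; lia.
rewrite dim_iter_tgt; last lia.
rewrite (_ : j - (dim u - (dim u - j)) = 0) /=; last lia.
rewrite (_ : N - j = (dim u - j) + (N - dim u)); last lia.
rewrite iterD -{2}(addn0 (N - dim u)) iter_tgt_idc //.
Qed.


Lemma sI_src i (x : cell D) : i < dim x -> sI i (src x) = sI i x.
Proof.
move=> h; rewrite /sI dim_src; last lia.
by rewrite (_ : dim x - i = ((dim x).-1 - i).+1) ?iterSr //; lia.
Qed.
Lemma tI_tgt i (x : cell D) : i < dim x -> tI i (tgt x) = tI i x.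
Proof.
move=> h; rewrite /tI dim_tgt; last lia.
by rewrite (_ : dim x - i = ((dim x).-1 - i).+1) ?iterSr //; lia.
Qed.
Lemma tI_src i (x : cell D) : i.+1 < dim x -> tI i (src x) = tI i x.
Proof.
move=> h; rewrite /tI dim_src; last lia.
rewrite (_ : dim x - i = ((dim x).-1 - i).-1.+1.+1); last lia.
rewrite (_ : (dim x).-1 - i = ((dim x).-1 - i).-1.+1); last lia.
have h1 : 1 < dim x by lia.
by rewrite !iterSr (ax2 h1).2.
Qed.
Lemma sI_tgt i (x : cell D) : i.+1 < dim x -> sI i (tgt x) = sI i x.
Proof.
move=> h; rewrite /sI dim_tgt; last lia.
rewrite (_ : dim x - i = ((dim x).-1 - i).-1.+1.+1); last lia.
rewrite (_ : (dim x).-1 - i = ((dim x).-1 - i).-1.+1); last lia.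
have h1 : 1 < dim x by lia.
by rewrite !iterSr (ax2 h1).1.
Qed.

Lemma sI_sI i j (x : cell D) : i <= j -> j <= dim x -> sI i (sI j x) = sI i x.
Proof.
move=> h1 h2; rewrite {1}/sI dim_sI // /sI -iterD; congr iter; lia.
Qed.
Lemma tI_tI i j (x : cell D) : i <= j -> j <= dim x -> tI i (tI j x) = tI i x.
Proof.
move=> h1 h2; rewrite {1}/tI dim_tI // /tI -iterD; congr iter; lia.
Qed.

Lemma sI_tI i j (x : cell D) : i < j -> j <= dim x -> sI i (tI j x) = sI i x.
Proof.
move=> h1; move: {2}(dim x - j) (erefl (dim x - j)) => d; elim: d x => [|d IH] x hd h2.
  by rewrite tI_small //; lia.
have h3: 0 < dim x by lia.
rewrite -tI_tgt; last lia.
rewrite IH; first (rewrite sI_tgt //; lia).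
  rewrite dim_tgt //; lia.
rewrite dim_tgt //; lia.
Qed.
Lemma tI_sI i j (x : cell D) : i < j -> j <= dim x -> tI i (sI j x) = tI i x.
Proof.
move=> h1; move: {2}(dim x - j) (erefl (dim x - j)) => d; elim: d x => [|d IH] x hd h2.
  by rewrite sI_small //; lia.
have h3: 0 < dim x by lia.
rewrite -sI_src; last lia.
rewrite IH; first (rewrite tI_src //; lia).
  rewrite dim_src //; lia.
rewrite dim_src //; lia.
Qed.

Lemma comp_src p (x y : cell D) : composable p x y -> p.+1 < dim x ->
  composable p (src x) (src y).
Proof.
case=> e [h1 h2] h3; split; first by rewrite !dim_src ?e //; lia.
split; first by rewrite dim_src //; lia.
rewrite tI_src // sI_src // -e; lia.
Qed.
Lemma comp_tgt p (x y : cell D) : composable p x y -> p.+1 < dim x ->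
  composable p (tgt x) (tgt y).
Proof.
case=> e [h1 h2] h3; split; first by rewrite !dim_tgt ?e //; lia.
split; first by rewrite dim_tgt //; lia.
rewrite tI_tgt // sI_tgt // -e; lia.
Qed.

Lemma sI_comp_lt p j (x y : cell D) : composable p x y -> p < j -> j <= dim x ->
  sI j (comp p y x) = comp p (sI j y) (sI j x) /\
  tI j (comp p y x) = comp p (tI j y) (tI j x).
Proof.
move=> hc h1; move: {2}(dim x - j) (erefl (dim x - j)) => d.
elim: d x y hc => [|d IH] x y hc hd h2.
  have e := hc.1.
  rewrite !sI_small ?tI_small ?ax4 //; lia.
have e := hc.1.
have h3 : p.+1 < dim x by lia.
rewrite -sI_src ?ax4 //; last lia.
rewrite -tI_tgt ?ax4 //; last lia.
rewrite (ax6 hc h3).1 (ax6 hc h3).2.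
have [A B] := IH _ _ (comp_src hc h3) ltac:(rewrite dim_src; lia) ltac:(rewrite dim_src; lia).
have [A' B'] := IH _ _ (comp_tgt hc h3) ltac:(rewrite dim_tgt; lia) ltac:(rewrite dim_tgt; lia).
rewrite A B' !sI_src ?tI_tgt ?tI_tgt //; try lia.
all: rewrite -?e; lia.
Qed.

Lemma sI_comp_eq p (x y : cell D) : composable p x y ->
  sI p (comp p y x) = sI p x /\ tI p (comp p y x) = tI p y.
Proof.
move=> hc; move: {2}(dim x - p.+1) (erefl (dim x - p.+1)) => d.
elim: d x y hc => [|d IH] x y hc hd.
  have [e [h1 h2]] := hc.
  have h3 : dim x = p.+1 by lia.
  rewrite /sI /tI ax4 // -e h3 subSnn /= (ax5 hc h3).1 (ax5 hc h3).2 //.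
have [e [h1 h2]] := hc.
have h3 : p.+1 < dim x by lia.
rewrite -(sI_src (x:= comp p y x)); last by rewrite ax4 //; lia.
rewrite -(tI_tgt (x:= comp p y x)); last by rewrite ax4 //; lia.
rewrite (ax6 hc h3).1 (ax6 hc h3).2.
have [A _] := IH _ _ (comp_src hc h3) ltac:(rewrite dim_src; lia).
have [_ B] := IH _ _ (comp_tgt hc h3) ltac:(rewrite dim_tgt; lia).
rewrite A B sI_src ?tI_tgt //; try lia.
all: rewrite -?e; lia.
Qed.

Lemma sI_comp_ge p j (x y : cell D) : composable p x y -> j <= p ->
  sI j (comp p y x) = sI j x /\ tI j (comp p y x) = tI j y.
Proof.
move=> hc h; have [e [h1 h2]] := hc.
rewrite -(sI_sI (j:=p)) ?ax4 //; last lia.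
rewrite -(tI_tI (j:=p) (x := comp p y x)) ?ax4 //; last lia.
rewrite (sI_comp_eq hc).1 (sI_comp_eq hc).2 sI_sI ?tI_tI //; lia.
Qed.

Variable xi0 : cell D -> cell D.
Hypothesis Hxd : forall u, dim (xi0 u) = (dim u).+1.

Definition okStages N c x k :=
  forall j, j < k -> composable j (idn N (xi0 (sI j x))) (whisk xi0 N c x j).

Lemma okStagesS N c x k : okStages N c x k.+1 -> okStages N c x k.
Proof. by move=> h j hj; apply: h; lia. Qed.

Lemma okStages_le N c x k k' : k' <= k -> okStages N c x k -> okStages N c x k'.
Proof. by move=> h h1 j hj; apply: h1; lia. Qed.

Lemma whisk_ext N c x x' k : (forall j, j < k -> sI j x = sI j x') ->
  whisk xi0 N c x k = whisk xi0 N c x' k.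
Proof.
elim: k => [|k IH] h //=. rewrite IH ?h //; move=> j hj; apply: h; lia.
Qed.

Lemma dim_whisk N c x k : dim c <= N -> k <= N -> k <= dim x -> okStages N c x k ->
  dim (whisk xi0 N c x k) = N.
Proof.
case: k => [|k] h1 h2 h3 h4 /=; first by rewrite dim_idn.
rewrite ax4 //; last by apply: h4.
rewrite dim_idn // Hxd dim_sI //; lia.
Qed.

Lemma sI_whisk N c x k j : k <= j -> j <= N -> dim c <= N -> k <= dim x ->
  okStages N c x k ->
  sI j (whisk xi0 N c x k) = whisk xi0 j (sI j c) x k /\
  tI j (whisk xi0 N c x k) = whisk xi0 j (tI j c) x k.
Proof.
elim: k => [|k IH] h1 h2 h3 h4 h5 /=; first by rewrite sI_idn // tI_idn.
have hc := h5 k (ltnSn k).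
have hdz : dim (xi0 (sI k x)) = k.+1 by rewrite Hxd dim_sI //; lia.
have [A B] := sI_comp_lt hc (j := j) ltac:(lia) ltac:(rewrite dim_idn; lia).
have [IA IB] := IH ltac:(lia) h2 h3 ltac:(lia) (okStagesS h5).
rewrite A B IA IB sI_idn ?tI_idn ?(sI_small (x := xi0 (sI k x))) ?(tI_small (x := xi0 (sI k x))) //; lia.
Qed.

Lemma tI_whisk_ge N c x k j : j <= k -> okStages N c x k ->
  tI j (whisk xi0 N c x k) = tI j (whisk xi0 N c x j).
Proof.
elim: k => [|k IH] h1 h2; first by rewrite (_ : j = 0) //; lia.
case: (eqVneq j k.+1) => [-> //|hne].
rewrite /= (sI_comp_ge (h2 k (ltnSn k)) (j := j) _).2; last lia.
apply: IH; [lia | exact: okStagesS h2].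
Qed.

Lemma stages_ok M (Ht : forall u, dim u < M -> tgt (xi0 u) = whisk xi0 (dim u) u u (dim u))
  N c x k : dim c <= N -> k <= N -> k <= dim x -> k <= M ->
  (forall j, j < k -> sI j c = sI j x) -> okStages N c x k.
Proof.
elim: k => [|k IH] h1 h2 h3 h4 h5; first by move=> j; rewrite ltn0.
have IH' := IH h1 ltac:(lia) ltac:(lia) ltac:(lia) ltac:(move=> j hj; apply: h5; lia).
move=> j hj; case: (eqVneq j k) => [->|hne]; last by apply: IH'; lia.
have hds : dim (sI k x) = k by rewrite dim_sI //; lia.
have hdz : dim (xi0 (sI k x)) = k.+1 by rewrite Hxd hds.
split; first by rewrite dim_idn ?dim_whisk //; lia.
split; first by rewrite dim_idn //; lia.
rewrite tI_idn; last lia; last lia.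
rewrite {1}/tI hdz subSnn /=.
rewrite idn_small; last by rewrite dim_tgt hdz //.
rewrite Ht; last by rewrite hds; lia.
have [A _] := @sI_whisk N c x k k (leqnn k) ltac:(lia) h1 ltac:(lia) IH'.
rewrite A h5 // hds; apply: whisk_ext => j0 hj0; rewrite sI_sI //; lia.
Qed.

Hypothesis Hs : forall u, 0 < dim u -> src (xi0 u) = xi0 (tgt u).

Lemma sI_xi j u : j < dim u -> sI j.+1 (xi0 u) = xi0 (tI j u).
Proof.
move: {2}(dim u - j.+1) (erefl (dim u - j.+1)) => d.
elim: d u => [|d IH] u hd h.
  have e : dim u = j.+1 by lia.
  by rewrite /sI /tI Hxd e subSnn (_ : j.+1 - j = 1) /= ?Hs ?e //; lia.
rewrite -sI_src // ?Hxd; last lia.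
rewrite Hs; last lia.
rewrite IH ?dim_tgt ?tI_tgt //; lia.
Qed.

Lemma tI_xi_tgt j u : j <= dim u -> tI j (xi0 u) = tI j (tgt (xi0 u)).
Proof.
move=> h; rewrite /tI dim_tgt Hxd // subSn // iterSr //.
Qed.

Hypothesis Ht : forall u, tgt (xi0 u) = whisk xi0 (dim u) u u (dim u).

Lemma xcmp_typing p x y : composable p x y ->
  okStages (dim x).+1 (tI p.+1 y) x p /\
  composable p (xi0 x) (whisk xi0 (dim x).+1 (tI p.+1 y) x p) /\
  composable p.+1 (xi0 y) (comp p (whisk xi0 (dim x).+1 (tI p.+1 y) x p) (xi0 x)).
Proof.
move=> hc; have [e [h1 h2]] := hc.
have Ht' : forall u, dim u < (dim x).+1 -> tgt (xi0 u) = whisk xi0 (dim u) u u (dim u).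
  by move=> u _; apply: Ht.
have hdc : dim (tI p.+1 y) = p.+1 by rewrite dim_tI //; lia.
have hsc : forall j, j < p -> sI j (tI p.+1 y) = sI j x.
  move=> j hj; rewrite sI_tI; [|lia|lia].
  rewrite -(sI_sI (i:=j) (j:=p) (x:=y)); [|lia|lia].
  rewrite -h2 sI_tI //; lia.
have ok1 : okStages (dim x).+1 (tI p.+1 y) x p.
  by apply: (stages_ok Ht'); try lia.
have okx : okStages (dim x) x x (dim x) by apply: (stages_ok Ht') => //; lia.
have oky : okStages (dim y) y y (dim y) by apply: (stages_ok Ht') => //; lia.
have hW : dim (whisk xi0 (dim x).+1 (tI p.+1 y) x p) = (dim x).+1.
  by apply: dim_whisk => //; lia.
have c1 : composable p (xi0 x) (whisk xi0 (dim x).+1 (tI p.+1 y) x p).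
  split; first by rewrite Hxd hW.
  split; first by rewrite Hxd; lia.
  rewrite tI_xi_tgt; last lia.
  rewrite Ht.
  rewrite tI_whisk_ge //; last lia.
  have [_ B] := @sI_whisk (dim x) x x p p (leqnn p) ltac:(lia) (leqnn _) ltac:(lia) (@okStages_le (dim x) x x (dim x) p ltac:(lia) okx).
  have [A _] := @sI_whisk (dim x).+1 (tI p.+1 y) x p p (leqnn p) ltac:(lia) ltac:(lia) ltac:(lia) ok1.
  rewrite A B sI_tI; [|lia|lia].
  by rewrite h2.
split => //; split => //.
split; first by rewrite ax4 // !Hxd e.
split; first by rewrite Hxd; lia.
rewrite tI_xi_tgt; last lia.
rewrite Ht.
rewrite tI_whisk_ge //; last lia.
have [_ B] := @sI_whisk (dim y) y y p.+1 p.+1 (leqnn _) ltac:(lia) (leqnn _) ltac:(lia) (@okStages_le (dim y) y y (dim y) p.+1 ltac:(lia) oky).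
have [A _] := @sI_whisk (dim x).+1 (tI p.+1 y) x p p.+1 (leqnSn p) ltac:(lia) ltac:(lia) ltac:(lia) ok1.
have [C _] := sI_comp_lt c1 (j := p.+1) (ltnSn p) ltac:(rewrite Hxd; lia).
rewrite B C A.
rewrite sI_xi //.
rewrite /= (sI_small (i := p.+1) (x := tI p.+1 y)); last lia.
rewrite h2 idn_small; last by rewrite Hxd dim_sI //; lia.
congr comp; apply: whisk_ext => j hj.
by rewrite -(hsc j hj) sI_tI //; lia.
Qed.

End Gen.

Section Free.
Variable C : wcat.
Let HC : is_wcat C := wcat_ax C.

Inductive term : Type :=
| Inj of cell C | TO | TXi of term | TSrc of term | TTgt of term | TId of term
| TCmp of nat & term & term.

Fixpoint dimT t := match t with
| Inj c => dim c | TO => 0 | TXi t => (dimT t).+1 | TSrc t => (dimT t).-1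
| TTgt t => (dimT t).-1 | TId t => (dimT t).+1 | TCmp _ _ b => dimT b end.

Definition sIT i t := iter (dimT t - i) TSrc t.
Definition tIT i t := iter (dimT t - i) TTgt t.
Definition idnT n t := iter (n - dimT t) TId t.
Fixpoint whiskT N c x k := match k with
| 0 => idnT N c
| k'.+1 => TCmp k' (whiskT N c x k') (idnT N (TXi (sIT k' x))) end.

Inductive TDef : term -> Prop :=
| D_inj c : TDef (Inj c)
| D_O : TDef TO
| D_xi t : TDef t -> TDef (TXi t)
| D_src t : TDef t -> 0 < dimT t -> TDef (TSrc t)
| D_tgt t : TDef t -> 0 < dimT t -> TDef (TTgt t)
| D_id t : TDef t -> TDef (TId t)
| D_cmp p x y : TDef x -> TDef y -> dimT x = dimT y -> p < dimT x -> TEq (tIT p x) (sIT p y) -> TDef (TCmp p y x)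
| D_eq t u : TDef t -> TEq t u -> TDef u
with TEq : term -> term -> Prop :=
| E_refl t : TEq t t
| E_sym t u : TEq t u -> TEq u t
| E_trans t u v : TEq t u -> TEq u v -> TEq t v
| E_xi t u : TEq t u -> TEq (TXi t) (TXi u)
| E_src t u : TEq t u -> TEq (TSrc t) (TSrc u)
| E_tgt t u : TEq t u -> TEq (TTgt t) (TTgt u)
| E_id t u : TEq t u -> TEq (TId t) (TId u)
| E_cmp p a b a' b' : TEq a a' -> TEq b b' -> TEq (TCmp p a b) (TCmp p a' b')
| E_csrc c : 0 < dim c -> TEq (Inj (src c)) (TSrc (Inj c))
| E_ctgt c : 0 < dim c -> TEq (Inj (tgt c)) (TTgt (Inj c))
| E_cid c : TEq (Inj (idc c)) (TId (Inj c))
| E_ccmp p (x y : cell C) : composable p x y -> TEq (Inj (comp p y x)) (TCmp p (Inj y) (Inj x))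
| E_ss x : TDef x -> 1 < dimT x -> TEq (TSrc (TSrc x)) (TSrc (TTgt x))
| E_ts x : TDef x -> 1 < dimT x -> TEq (TTgt (TSrc x)) (TTgt (TTgt x))
| E_sid u : TEq (TSrc (TId u)) u
| E_tid u : TEq (TTgt (TId u)) u
| E_s1 p x y : TDef x -> TDef y -> dimT x = dimT y -> p < dimT x -> TEq (tIT p x) (sIT p y) -> dimT x = p.+1 -> TEq (TSrc (TCmp p y x)) (TSrc x)
| E_t1 p x y : TDef x -> TDef y -> dimT x = dimT y -> p < dimT x -> TEq (tIT p x) (sIT p y) -> dimT x = p.+1 -> TEq (TTgt (TCmp p y x)) (TTgt y)
| E_s2 p x y : TDef x -> TDef y -> dimT x = dimT y -> p < dimT x -> TEq (tIT p x) (sIT p y) -> p.+1 < dimT x -> TEq (TSrc (TCmp p y x)) (TCmp p (TSrc y) (TSrc x))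
| E_t2 p x y : TDef x -> TDef y -> dimT x = dimT y -> p < dimT x -> TEq (tIT p x) (sIT p y) -> p.+1 < dimT x -> TEq (TTgt (TCmp p y x)) (TCmp p (TTgt y) (TTgt x))
| E_ul p x : TDef x -> p < dimT x -> TEq (TCmp p x (idnT (dimT x) (sIT p x))) x
| E_ur p x : TDef x -> p < dimT x -> TEq (TCmp p (idnT (dimT x) (tIT p x)) x) x
| E_assoc p x y z : TDef x -> TDef y -> dimT x = dimT y -> p < dimT x -> TEq (tIT p x) (sIT p y) -> TDef y -> TDef z -> dimT y = dimT z -> p < dimT y -> TEq (tIT p y) (sIT p z) ->
    TEq (TCmp p z (TCmp p y x)) (TCmp p (TCmp p z y) x)
| E_inter p q x x' y y' : p < q -> TDef x -> TDef x' -> dimT x = dimT x' -> q < dimT x -> TEq (tIT q x) (sIT q x') -> TDef y -> TDef y' -> dimT y = dimT y' -> q < dimT y -> TEq (tIT q y) (sIT q y') ->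
    TDef x -> TDef y -> dimT x = dimT y -> p < dimT x -> TEq (tIT p x) (sIT p y) -> TDef x' -> TDef y' -> dimT x' = dimT y' -> p < dimT x' -> TEq (tIT p x') (sIT p y') ->
    TEq (TCmp p (TCmp q y' y) (TCmp q x' x)) (TCmp q (TCmp p y' x') (TCmp p y x))
| E_idcmp p x y : TDef x -> TDef y -> dimT x = dimT y -> p < dimT x -> TEq (tIT p x) (sIT p y) -> TEq (TId (TCmp p y x)) (TCmp p (TId y) (TId x))
| E_xs0 x : TDef x -> dimT x = 0 -> TEq (TSrc (TXi x)) TO
| E_xt0 x : TDef x -> dimT x = 0 -> TEq (TTgt (TXi x)) x
| E_xs x : TDef x -> 0 < dimT x -> TEq (TSrc (TXi x)) (TXi (TTgt x))
| E_xt x : TDef x -> 0 < dimT x -> TEq (TTgt (TXi x)) (whiskT (dimT x) x x (dimT x))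
| E_xcmp p x y : TDef x -> TDef y -> dimT x = dimT y -> p < dimT x -> TEq (tIT p x) (sIT p y) ->
    TEq (TXi (TCmp p y x)) (TCmp p.+1 (TCmp p (whiskT (dimT x).+1 (tIT p.+1 y) x p) (TXi x)) (TXi y))
| E_xid u : TEq (TXi (TId u)) (TId (TXi u))
| E_xx u : TEq (TXi (TXi u)) (TId (TXi u))
| E_xo : TEq (TXi TO) (TId TO).


Scheme TDef_ind2 := Induction for TDef Sort Prop
with TEq_ind2 := Induction for TEq Sort Prop.
Combined Scheme TDE_ind from TDef_ind2, TEq_ind2.

Lemma dimT_iter_src k t : dimT (iter k TSrc t) = dimT t - k.
Proof. elim: k => [|k IH] /=; [by rewrite subn0 | rewrite IH; lia]. Qed.
Lemma dimT_iter_tgt k t : dimT (iter k TTgt t) = dimT t - k.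
Proof. elim: k => [|k IH] /=; [by rewrite subn0 | rewrite IH; lia]. Qed.
Lemma dimT_iter_id k t : dimT (iter k TId t) = dimT t + k.
Proof. elim: k => [|k IH] /=; [by rewrite addn0 | rewrite IH; lia]. Qed.
Lemma dimT_sIT i t : i <= dimT t -> dimT (sIT i t) = i.
Proof. rewrite /sIT dimT_iter_src; lia. Qed.
Lemma dimT_tIT i t : i <= dimT t -> dimT (tIT i t) = i.
Proof. rewrite /tIT dimT_iter_tgt; lia. Qed.
Lemma dimT_idnT n t : dimT t <= n -> dimT (idnT n t) = n.
Proof. rewrite /idnT dimT_iter_id; lia. Qed.
Lemma dimT_whiskT N c x k : k <= dimT x -> k <= N -> dimT c <= N -> dimT (whiskT N c x k) = N.
Proof.
case: k => [|k] h1 h2 h3 /=; first by rewrite dimT_idnT.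
rewrite dimT_idnT //= dimT_sIT; lia.
Qed.

Lemma TEq_dim_all : (forall t, TDef t -> True) /\ (forall t u, TEq t u -> dimT t = dimT u).
Proof.
apply (@TDE_ind (fun (t : term) (_ : TDef t) => True) (fun (t u : term) (_ : TEq t u) => dimT t = dimT u)).
all: intros; simpl in *; try done; try lia.
all: first [ by rewrite (dim_src HC) | by rewrite (dim_tgt HC) | by rewrite (ax3 HC _).1
  | by rewrite (ax4 HC) | by rewrite dimT_idnT ?dimT_sIT //; lia | by rewrite dimT_whiskT //; lia ].
Qed.
Lemma TEq_dim t u : TEq t u -> dimT t = dimT u.
Proof. exact: (proj2 TEq_dim_all). Qed.


Section Sound.
Variable E : expansion.
Variable f : wfunctor C (U E).
Let HE : is_wcat E := wcat_ax E.
Let HX := exp_ax E.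
Let Hf : is_wfunctor f := wfun_ax f.
Local Notation xE := (xi (e:=E)).

Fixpoint eval t : cell E := match t with
| Inj c => f c | TO => orig E | TXi t => xE (eval t) | TSrc t => src (eval t)
| TTgt t => tgt (eval t) | TId t => idc (eval t) | TCmp p a b => comp p (eval a) (eval b) end.

Lemma X_o : dim (orig E) = 0. Proof. by case: HX. Qed.
Lemma X_dim u : dim (xE u) = (dim u).+1. Proof. by case: HX => _ [H _]. Qed.
Lemma X_0 u : dim u = 0 -> src (xE u) = orig E /\ tgt (xE u) = u.
Proof. by case: HX => _ [_ [H _]]; apply: H. Qed.
Lemma X_pos u : 0 < dim u -> src (xE u) = xE (tgt u) /\ tgt (xE u) = whisk xE (dim u) u u (dim u).
Proof. by case: HX => _ [_ [_ [H _]]]; apply: H. Qed.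
Lemma X_cmp p x y : composable p x y ->
  xE (comp p y x) = comp p.+1 (comp p (whisk xE (dim x).+1 (tI p.+1 y) x p) (xE x)) (xE y).
Proof. by case: HX => _ [_ [_ [_ [H _]]]]; apply: H. Qed.
Lemma X_id u : xE (idc u) = idc (xE u). Proof. by case: HX => _ [_ [_ [_ [_ [H _]]]]]. Qed.
Lemma X_xx u : xE (xE u) = idc (xE u). Proof. by case: HX => _ [_ [_ [_ [_ [_ [H _]]]]]]. Qed.
Lemma X_xo : xE (orig E) = idc (orig E). Proof. by case: HX => _ [_ [_ [_ [_ [_ [_ H]]]]]]. Qed.

Lemma eval_iter_src k t : eval (iter k TSrc t) = iter k (@src E) (eval t).
Proof. by elim: k => //= k ->. Qed.
Lemma eval_iter_tgt k t : eval (iter k TTgt t) = iter k (@tgt E) (eval t).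
Proof. by elim: k => //= k ->. Qed.
Lemma eval_iter_id k t : eval (iter k TId t) = iter k (@idc E) (eval t).
Proof. by elim: k => //= k ->. Qed.
Lemma eval_sIT i t : dim (eval t) = dimT t -> eval (sIT i t) = sI i (eval t).
Proof. by move=> h; rewrite /sIT /sI eval_iter_src h. Qed.
Lemma eval_tIT i t : dim (eval t) = dimT t -> eval (tIT i t) = tI i (eval t).
Proof. by move=> h; rewrite /tIT /tI eval_iter_tgt h. Qed.
Lemma eval_idnT n t : dim (eval t) = dimT t -> eval (idnT n t) = idn n (eval t).
Proof. by move=> h; rewrite /idnT /idn eval_iter_id h. Qed.
Lemma eval_whiskT N c x k : dim (eval c) = dimT c -> dim (eval x) = dimT x -> k <= dimT x ->
  eval (whiskT N c x k) = whisk xE N (eval c) (eval x) k.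
Proof.
move=> hc hx; elim: k => [|k IH] hk /=; first by rewrite eval_idnT.
rewrite IH; last lia.
have hd : dim (eval (TXi (sIT k x))) = dimT (TXi (sIT k x)).
  rewrite /= X_dim eval_sIT // (dim_sI HE) ?dimT_sIT ?hx //; lia.
by rewrite eval_idnT // /= eval_sIT.
Qed.

Lemma compE p x y : dim (eval x) = dimT x -> dim (eval y) = dimT y -> dimT x = dimT y ->
  p < dimT x -> eval (tIT p x) = eval (sIT p y) -> composable p (eval x) (eval y).
Proof.
move=> h1 h2 h3 h4 h5; split; first by rewrite h1 h2.
split; first by rewrite h1.
by rewrite -eval_tIT // -eval_sIT.
Qed.

Lemma sound_all : (forall t, TDef t -> dim (eval t) = dimT t) /\
                  (forall t u, TEq t u -> eval t = eval u).
Proof.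
apply (@TDE_ind (fun (t : term) (_ : TDef t) => dim (eval t) = dimT t)
                (fun (t u : term) (_ : TEq t u) => eval t = eval u)); intros; simpl in *.
all: try congruence.
all: repeat match goal with
 | h1 : dim (eval ?x) = dimT ?x, h2 : dim (eval ?y) = dimT ?y, h3 : dimT ?x = dimT ?y,
   h4 : is_true (?p < dimT ?x), h5 : eval (tIT ?p ?x) = eval (sIT ?p ?y) |- _ =>
   have := compE h1 h2 h3 h4 h5; clear h5; move=> ?
 end.
all: try (by rewrite (ax4 HE)).
all: try (by rewrite (ax3 HE _).1 H).
all: try (match goal with h : TEq ?t ?u, h' : eval ?t = eval ?u, h'' : dim (eval ?t) = dimT ?t
   |- dim (eval ?u) = dimT ?u => by rewrite -h' -(TEq_dim h) end).
all: try (by rewrite (dim_src HE); lia).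
all: try (by rewrite (dim_tgt HE); lia).
all: try (by rewrite X_dim; congruence).
all: try (by apply: X_o).
all: try (by apply: Hf.1).
all: try (by apply: (Hf.2.1 _ _).1).
all: try (by apply: (Hf.2.1 _ _).2).
all: try (by apply: Hf.2.2.1).
all: try (by apply: Hf.2.2.2).
all: try (by apply: (ax2 HE _).1; lia).
all: try (by apply: (ax2 HE _).2; lia).
all: try (by apply: (ax3 HE _).2.1).
all: try (by apply: (ax3 HE _).2.2).
all: try (by apply: (ax5 HE _ _).1; first [assumption | lia]).
all: try (by apply: (ax5 HE _ _).2; first [assumption | lia]).
all: try (by apply: (ax6 HE _ _).1; first [assumption | lia]).
all: try (by apply: (ax6 HE _ _).2; first [assumption | lia]).
all: try (by apply: (ax8 HE)).
all: try (by apply: (ax9 HE)).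
all: try (by apply: (ax10 HE)).
all: try (by apply: X_id).
all: try (by apply: X_xx).
all: try (by apply: X_xo).
all: try (by apply: (X_0 _).1; lia).
all: try (by apply: (X_0 _).2; lia).
all: try (by apply: (X_pos _).1; lia).
- have hd : dim (eval (sIT p x)) = dimT (sIT p x).
    by rewrite eval_sIT // (dim_sI HE) ?dimT_sIT; lia.
  rewrite eval_idnT // eval_sIT // -H. apply: (ax7 HE _).1; lia.
- have hd : dim (eval (tIT p x)) = dimT (tIT p x).
    by rewrite eval_tIT // (dim_tI HE) ?dimT_tIT; lia.
  rewrite eval_idnT // eval_tIT // -H. apply: (ax7 HE _).2; lia.
- rewrite (X_pos _).2; last lia.
  by rewrite eval_whiskT // H.
- rewrite X_cmp //.
  have hd : dim (eval (tIT p.+1 y)) = dimT (tIT p.+1 y).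
    by rewrite eval_tIT // (dim_tI HE) ?dimT_tIT; lia.
  rewrite eval_whiskT //; last lia.
  rewrite eval_tIT //; congruence.
Qed.
Lemma sound_def t : TDef t -> dim (eval t) = dimT t.
Proof. exact: (proj1 sound_all). Qed.
Lemma sound_eq t u : TEq t u -> eval t = eval u.
Proof. exact: (proj2 sound_all). Qed.
End Sound.

Definition cls t : term -> Prop := fun u => TEq t u.
Definition K := {P : term -> Prop | exists t, TDef t /\ P = cls t}.

Definition mkc (t : term) : K :=
  match excluded_middle_informative (TDef t) with
  | left H => exist _ (cls t) (ex_intro (fun u => TDef u /\ cls t = cls u) t (conj H erefl))
  | right _ => exist _ (cls TO) (ex_intro (fun u => TDef u /\ cls TO = cls u) TO (conj D_O erefl))
  end.

Definition rep (X : K) : term := proj1_sig (constructive_indefinite_description _ (proj2_sig X)).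
Lemma rep_spec X : TDef (rep X) /\ proj1_sig X = cls (rep X).
Proof. exact: (proj2_sig (constructive_indefinite_description _ (proj2_sig X))). Qed.

Lemma K_ext (X Y : K) : proj1_sig X = proj1_sig Y -> X = Y.
Proof.
case: X => P HP; case: Y => Q HQ /= e; subst; f_equal; apply: proof_irrelevance.
Qed.

Lemma cls_eq t u : TEq t u -> cls t = cls u.
Proof.
move=> h; apply: functional_extensionality => v; apply: propositional_extensionality.
split => h'; [exact: E_trans (E_sym h) h' | exact: E_trans h h'].
Qed.

Lemma mkc_eq t u : TEq t u -> mkc t = mkc u.
Proof.
move=> h; rewrite /mkc.
case: (excluded_middle_informative (TDef t)) => Ht;
case: (excluded_middle_informative (TDef u)) => Hu.
- by apply: K_ext => /=; apply: cls_eq.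
- by case: Hu; apply: D_eq Ht h.
- by case: Ht; apply: D_eq Hu (E_sym h).
- by [].
Qed.

Lemma mkc_val t : TDef t -> proj1_sig (mkc t) = cls t.
Proof. by move=> h; rewrite /mkc; case: (excluded_middle_informative (TDef t)). Qed.

Lemma mkc_inj t u : TDef t -> TDef u -> mkc t = mkc u -> TEq t u.
Proof.
move=> Ht Hu e; have := congr1 (@proj1_sig _ _) e; rewrite !mkc_val // => e'.
have : cls u u := E_refl u. by rewrite -e'.
Qed.

Lemma mkc_rep X : mkc (rep X) = X.
Proof. apply: K_ext; rewrite mkc_val; [by rewrite (rep_spec X).2 | exact: (rep_spec X).1]. Qed.

Lemma rep_mkc t : TDef t -> TEq (rep (mkc t)) t.
Proof. move=> h; apply: mkc_inj => //; [exact: (rep_spec _).1 | exact: mkc_rep]. Qed.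

Lemma K_ind (P : K -> Prop) : (forall t, TDef t -> P (mkc t)) -> forall X, P X.
Proof. move=> h X; rewrite -(mkc_rep X); apply: h; exact: (rep_spec X).1. Qed.

Definition dimK (X : K) := dimT (rep X).
Definition srcK (X : K) := mkc (TSrc (rep X)).
Definition tgtK (X : K) := mkc (TTgt (rep X)).
Definition idcK (X : K) := mkc (TId (rep X)).
Definition compK p (Y X : K) := mkc (TCmp p (rep Y) (rep X)).
Definition xiK (X : K) := mkc (TXi (rep X)).
Definition oK := mkc TO.

Definition KD : wdata := @WData K dimK srcK tgtK idcK compK.

Lemma dimK_mkc t : TDef t -> @dim KD (mkc t) = dimT t.
Proof. by move=> h; rewrite /= /dimK; apply: TEq_dim; apply: rep_mkc. Qed.
Lemma srcK_mkc t : TDef t -> @src KD (mkc t) = mkc (TSrc t).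
Proof. by move=> h; apply: mkc_eq; apply: E_src; apply: rep_mkc. Qed.
Lemma tgtK_mkc t : TDef t -> @tgt KD (mkc t) = mkc (TTgt t).
Proof. by move=> h; apply: mkc_eq; apply: E_tgt; apply: rep_mkc. Qed.
Lemma idcK_mkc t : TDef t -> @idc KD (mkc t) = mkc (TId t).
Proof. by move=> h; apply: mkc_eq; apply: E_id; apply: rep_mkc. Qed.
Lemma xiK_mkc t : TDef t -> xiK (mkc t) = mkc (TXi t).
Proof. by move=> h; apply: mkc_eq; apply: E_xi; apply: rep_mkc. Qed.
Lemma compK_mkc p a b : TDef a -> TDef b -> @comp KD p (mkc a) (mkc b) = mkc (TCmp p a b).
Proof. by move=> ha hb; apply: mkc_eq; apply: E_cmp; apply: rep_mkc. Qed.

Lemma TDef_iter_src k t : TDef t -> k <= dimT t -> TDef (iter k TSrc t).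
Proof.
move=> h; elim: k => [|k IH] hk //=; apply: D_src; first by apply: IH; lia.
rewrite dimT_iter_src; lia.
Qed.
Lemma TDef_iter_tgt k t : TDef t -> k <= dimT t -> TDef (iter k TTgt t).
Proof.
move=> h; elim: k => [|k IH] hk //=; apply: D_tgt; first by apply: IH; lia.
rewrite dimT_iter_tgt; lia.
Qed.
Lemma TDef_iter_id k t : TDef t -> TDef (iter k TId t).
Proof. by move=> h; elim: k => [|k IH] //=; apply: D_id. Qed.
Lemma TDef_sIT i t : TDef t -> TDef (sIT i t).
Proof. by move=> h; apply: TDef_iter_src => //; lia. Qed.
Lemma TDef_tIT i t : TDef t -> TDef (tIT i t).
Proof. by move=> h; apply: TDef_iter_tgt => //; lia. Qed.
Lemma TDef_idnT n t : TDef t -> TDef (idnT n t).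
Proof. by move=> h; apply: TDef_iter_id. Qed.

Lemma iter_src_mkc k t : TDef t -> k <= dimT t -> iter k (@src KD) (mkc t) = mkc (iter k TSrc t).
Proof.
move=> h; elim: k => [|k IH] hk //.
rewrite !iterS IH; last lia.
rewrite srcK_mkc //; apply: TDef_iter_src => //; lia.
Qed.
Lemma iter_tgt_mkc k t : TDef t -> k <= dimT t -> iter k (@tgt KD) (mkc t) = mkc (iter k TTgt t).
Proof.
move=> h; elim: k => [|k IH] hk //.
rewrite !iterS IH; last lia.
rewrite tgtK_mkc //; apply: TDef_iter_tgt => //; lia.
Qed.
Lemma iter_idc_mkc k t : TDef t -> iter k (@idc KD) (mkc t) = mkc (iter k TId t).
Proof.
move=> h; elim: k => [|k IH] //.
by rewrite !iterS IH idcK_mkc //; apply: TDef_iter_id.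
Qed.
Lemma sIK_mkc i t : TDef t -> @sI KD i (mkc t) = mkc (sIT i t).
Proof. by move=> h; rewrite /sI dimK_mkc // iter_src_mkc //; lia. Qed.
Lemma tIK_mkc i t : TDef t -> @tI KD i (mkc t) = mkc (tIT i t).
Proof. by move=> h; rewrite /tI dimK_mkc // iter_tgt_mkc //; lia. Qed.
Lemma idnK_mkc n t : TDef t -> @idn KD n (mkc t) = mkc (idnT n t).
Proof. by move=> h; rewrite /idn dimK_mkc // iter_idc_mkc. Qed.

Lemma compK_iff p x y : TDef x -> TDef y ->
  (@composable KD p (mkc x) (mkc y) <->
   [/\ dimT x = dimT y, p < dimT x & TEq (tIT p x) (sIT p y)]).
Proof.
move=> hx hy; rewrite /composable !dimK_mkc // tIK_mkc // sIK_mkc //.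
split.
  case=> e [h1 h2]; split => //; apply: mkc_inj => //; [exact: TDef_tIT | exact: TDef_sIT].
by case=> e h1 h2; split => //; split => //; apply: mkc_eq.
Qed.

Lemma Def_cmpK p x y : TDef x -> TDef y -> @composable KD p (mkc x) (mkc y) -> TDef (TCmp p y x).
Proof. by move=> hx hy /(compK_iff p hx hy) [e h1 h2]; apply: D_cmp. Qed.


Ltac unK hc Hx Hy := let e := fresh "eK" in let h1 := fresh "hK" in let h2 := fresh "hK" in
  move: (hc) => /(compK_iff _ Hx Hy) [e h1 h2].

Lemma K_wcat : is_wcat KD.
Proof.
split.
  elim/K_ind => t Ht; rewrite dimK_mkc // => h.
  have Hs := D_src Ht h; have Htg := D_tgt Ht h.
  by rewrite srcK_mkc // tgtK_mkc // !dimK_mkc.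
split.
  elim/K_ind => t Ht; rewrite dimK_mkc // => h.
  have h0 : 0 < dimT t by lia.
  have Hs := D_src Ht h0; have Htg := D_tgt Ht h0.
  rewrite (srcK_mkc Ht) (tgtK_mkc Ht) (srcK_mkc Hs) (srcK_mkc Htg) (tgtK_mkc Hs) (tgtK_mkc Htg).
  by split; apply: mkc_eq; [exact: E_ss | exact: E_ts].
split.
  elim/K_ind => u Hu; have Hi := D_id Hu.
  rewrite (idcK_mkc Hu) (dimK_mkc Hi) (dimK_mkc Hu) (srcK_mkc Hi) (tgtK_mkc Hi).
  by split => //; split; apply: mkc_eq; [exact: E_sid | exact: E_tid].
split.
  move=> p; elim/K_ind => x Hx; elim/K_ind => y Hy hc.
  have Hc := Def_cmpK Hx Hy hc.
  by rewrite compK_mkc // !dimK_mkc.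
split.
  move=> p; elim/K_ind => x Hx; elim/K_ind => y Hy hc.
  have Hc := Def_cmpK Hx Hy hc; unK hc Hx Hy.
  rewrite dimK_mkc // => h.
  rewrite compK_mkc // srcK_mkc // tgtK_mkc // srcK_mkc // tgtK_mkc //.
  by split; apply: mkc_eq; [exact: E_s1 | exact: E_t1].
split.
  move=> p; elim/K_ind => x Hx; elim/K_ind => y Hy hc.
  have Hc := Def_cmpK Hx Hy hc; unK hc Hx Hy.
  rewrite dimK_mkc // => h.
  have h0x : 0 < dimT x by lia.
  have h0y : 0 < dimT y by lia.
  have Hsx := D_src Hx h0x; have Hsy := D_src Hy h0y.
  have Htx := D_tgt Hx h0x; have Hty := D_tgt Hy h0y.
  rewrite compK_mkc // srcK_mkc // tgtK_mkc // (srcK_mkc Hx) (srcK_mkc Hy) (tgtK_mkc Hx) (tgtK_mkc Hy).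
  rewrite !compK_mkc //.
  by split; apply: mkc_eq; [exact: E_s2 | exact: E_t2].
split.
  move=> p; elim/K_ind => x Hx; rewrite dimK_mkc // => h.
  have Hs := TDef_sIT p Hx; have Ht := TDef_tIT p Hx.
  have Hi1 := TDef_idnT (dimT x) Hs; have Hi2 := TDef_idnT (dimT x) Ht.
  rewrite (sIK_mkc p Hx) (tIK_mkc p Hx) (idnK_mkc _ Hs) (idnK_mkc _ Ht).
  rewrite (compK_mkc _ Hx Hi1) (compK_mkc _ Hi2 Hx).
  by split; apply: mkc_eq; [exact: E_ul | exact: E_ur].
split.
  move=> p; elim/K_ind => x Hx; elim/K_ind => y Hy; elim/K_ind => z Hz hc1 hc2.
  have Hc1 := Def_cmpK Hx Hy hc1; have Hc2 := Def_cmpK Hy Hz hc2.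
  unK hc1 Hx Hy; unK hc2 Hy Hz.
  rewrite !compK_mkc //.
  by apply: mkc_eq; apply: E_assoc.
split.
  move=> p q; elim/K_ind => x Hx; elim/K_ind => x' Hx'; elim/K_ind => y Hy; elim/K_ind => y' Hy'.
  move=> hpq hc1 hc2 hc3 hc4.
  have Hc1 := Def_cmpK Hx Hx' hc1; have Hc2 := Def_cmpK Hy Hy' hc2.
  have Hc3 := Def_cmpK Hx Hy hc3; have Hc4 := Def_cmpK Hx' Hy' hc4.
  unK hc1 Hx Hx'; unK hc2 Hy Hy'; unK hc3 Hx Hy; unK hc4 Hx' Hy'.
  rewrite !compK_mkc //.
  by apply: mkc_eq; apply: E_inter.
move=> p; elim/K_ind => x Hx; elim/K_ind => y Hy hc.
have Hc := Def_cmpK Hx Hy hc; unK hc Hx Hy.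
rewrite compK_mkc // !idcK_mkc // compK_mkc; try apply: D_id => //.
by apply: mkc_eq; apply: E_idcmp.
Qed.

Lemma whisk0 (D : wdata) (xi0 : cell D -> cell D) N c x : whisk xi0 N c x 0 = idn N c.
Proof. by []. Qed.
Lemma whiskS (D : wdata) (xi0 : cell D -> cell D) N c x k :
  whisk xi0 N c x k.+1 = comp k (whisk xi0 N c x k) (idn N (xi0 (sI k x))).
Proof. by []. Qed.

Lemma K_xdim (X : K) : @dim KD (xiK X) = (@dim KD X).+1.
Proof. by elim/K_ind: X => t Ht; rewrite xiK_mkc // !dimK_mkc //; apply: D_xi. Qed.

Lemma K_xsrc (X : K) : 0 < @dim KD X -> @src KD (xiK X) = xiK (@tgt KD X).
Proof.
elim/K_ind: X => t Ht; rewrite dimK_mkc // => h.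
rewrite xiK_mkc // srcK_mkc ?tgtK_mkc ?xiK_mkc //; try apply: D_xi => //; try apply: D_tgt => //.
by apply: mkc_eq; apply: E_xs.
Qed.

Lemma transfer N c x k : TDef c -> TDef x -> k <= dimT x ->
  okStages (D := KD) xiK N (mkc c) (mkc x) k ->
  @whisk KD xiK N (mkc c) (mkc x) k = mkc (whiskT N c x k) /\ TDef (whiskT N c x k).
Proof.
move=> Hc Hx; elim: k => [|k IH] hk ok.
  by rewrite whisk0 idnK_mkc //; split => //; apply: TDef_idnT.
have [IA IB] := IH ltac:(lia) (okStagesS ok).
have Hs := TDef_sIT k Hx.
have Hz := TDef_idnT N (D_xi Hs).
have hc := ok k (ltnSn k).
rewrite IA sIK_mkc // xiK_mkc // idnK_mkc // in hc; last by apply: D_xi.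
rewrite whiskS IA sIK_mkc // xiK_mkc // idnK_mkc //; last by apply: D_xi.
rewrite compK_mkc //; split => //.
exact: Def_cmpK Hz IB hc.
Qed.

Lemma K_xtgt_lt n (X : K) : @dim KD X < n ->
  @tgt KD (xiK X) = @whisk KD xiK (@dim KD X) X X (@dim KD X).
Proof.
elim: n X => [|n IH] X; first by rewrite ltn0.
elim/K_ind: X => x Hx; rewrite dimK_mkc // => hn.
have Hxi := D_xi Hx.
rewrite xiK_mkc // tgtK_mkc //.
case: (posnP (dimT x)) => h0.
  rewrite h0 whisk0 idnK_mkc // /idnT h0 /=.
  by apply: mkc_eq; apply: E_xt0.
have Ht : forall u, @dim KD u < dimT x ->
    @tgt KD (xiK u) = @whisk KD xiK (@dim KD u) u u (@dim KD u).
  by move=> u hu; apply: IH; lia.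
have ok := stages_ok K_wcat K_xdim Ht (N := dimT x) (c := mkc x) (x := mkc x) (k := dimT x)
  ltac:(rewrite dimK_mkc //) (leqnn _) ltac:(rewrite dimK_mkc //) (leqnn _) (fun _ _ => erefl).
have [A B] := transfer Hx Hx (leqnn _) ok.
rewrite A; apply: mkc_eq; exact: E_xt.
Qed.

Lemma K_xtgt (X : K) : @tgt KD (xiK X) = @whisk KD xiK (@dim KD X) X X (@dim KD X).
Proof. exact: (@K_xtgt_lt (@dim KD X).+1). Qed.

Lemma K_exp : is_expansion (C := KD) oK xiK.
Proof.
split; first by rewrite /oK dimK_mkc //; apply: D_O.
split; first exact: K_xdim.
split.
  elim/K_ind => x Hx; rewrite dimK_mkc // => h.
  have Hxi := D_xi Hx.
  rewrite xiK_mkc // srcK_mkc // tgtK_mkc //.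
  by split; apply: mkc_eq; [exact: E_xs0 | exact: E_xt0].
split.
  by move=> x h; split; [exact: K_xsrc | exact: K_xtgt].
split.
  move=> p X Y hc.
  have [ok1 [c1 c2]] := xcmp_typing K_wcat K_xdim K_xsrc K_xtgt hc.
  move: hc ok1 c1 c2; elim/K_ind: X => x Hx; elim/K_ind: Y => y Hy hc ok1 c1 c2.
  have Hc := Def_cmpK Hx Hy hc; unK hc Hx Hy.
  have Htc := TDef_tIT p.+1 Hy.
  rewrite dimK_mkc // tIK_mkc // in ok1 c1 c2 *.
  have [W DW] := transfer Htc Hx (ltnW hK) ok1.
  rewrite (compK_mkc p Hy Hx) (xiK_mkc Hc).
  rewrite W in c1 c2 *.
  rewrite ?(xiK_mkc Hx) ?(xiK_mkc Hy) in c1 c2 *.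
  rewrite (compK_mkc p DW (D_xi Hx)).
  rewrite (compK_mkc p DW (D_xi Hx)) in c2.
  rewrite (compK_mkc p.+1 (Def_cmpK (D_xi Hx) DW c1) (D_xi Hy)).
  by apply: mkc_eq; apply: E_xcmp.
split.
  elim/K_ind => u Hu; rewrite idcK_mkc // !xiK_mkc // ?idcK_mkc //; try apply: D_xi => //; try apply: D_id => //.
  by apply: mkc_eq; apply: E_xid.
split.
  elim/K_ind => u Hu; rewrite !xiK_mkc // ?idcK_mkc //; try apply: D_xi => //; try apply: D_xi => //.
  by apply: mkc_eq; apply: E_xx.
by rewrite /oK xiK_mkc ?idcK_mkc //; try apply: D_O; apply: mkc_eq; apply: E_xo.
Qed.

Definition Kc : wcat := @WCat KD K_wcat.
Definition FC : expansion := @Expansion Kc oK xiK K_exp.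

Lemma eta_ax : is_wfunctor (C := C) (D := Kc) (fun c => mkc (Inj c)).
Proof.
split; first by move=> c; rewrite dimK_mkc //; apply: D_inj.
split.
  move=> c h; rewrite srcK_mkc ?tgtK_mkc; try apply: D_inj.
  by split; apply: mkc_eq; [apply: E_csrc | apply: E_ctgt].
split.
  move=> u; rewrite idcK_mkc; last apply: D_inj.
  by apply: mkc_eq; apply: E_cid.
move=> p x y hc; rewrite compK_mkc; try apply: D_inj.
by apply: mkc_eq; apply: E_ccmp.
Qed.

Definition eta : wfunctor C (U FC) := @WFun C Kc (fun c => mkc (Inj c)) eta_ax.

Section Univ.
Variable E : expansion.
Variable f : wfunctor C (U E).

Definition gfun (X : K) : cell E := eval f (rep X).

Lemma g_mkc t : TDef t -> gfun (mkc t) = eval f t.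
Proof. by move=> h; rewrite /gfun; apply: sound_eq; apply: rep_mkc. Qed.

Lemma g_ax : is_wfunctor (C := Kc) (D := U E) gfun.
Proof.
split.
  by elim/K_ind => t Ht; rewrite g_mkc // dimK_mkc // sound_def.
split.
  elim/K_ind => t Ht; rewrite dimK_mkc // => h.
  rewrite srcK_mkc // tgtK_mkc // !g_mkc //; [apply: D_tgt | apply: D_src] => //.
split.
  elim/K_ind => t Ht; rewrite idcK_mkc // !g_mkc //; apply: D_id => //.
move=> p; elim/K_ind => x Hx; elim/K_ind => y Hy hc.
have Hc := Def_cmpK Hx Hy hc.
by rewrite compK_mkc // !g_mkc.
Qed.

Definition gW : wfunctor (U FC) (U E) := @WFun (U FC) (U E) gfun g_ax.

Lemma g_orig : gW (orig FC) = orig E.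
Proof. by rewrite /= /oK g_mkc //; apply: D_O. Qed.
Lemma g_xi x : gW (xi x) = xi (gW x).
Proof.
by elim/K_ind: x => t Ht; rewrite /= xiK_mkc // !g_mkc //; apply: D_xi.
Qed.

Definition gM : expmor FC E := @ExpMor FC E gW g_orig g_xi.

Lemma gM_eta x : gM (eta x) = f x.
Proof. by rewrite /= g_mkc //; apply: D_inj. Qed.

Lemma gM_unique (g' : expmor FC E) : (forall x, g' (eta x) = f x) -> forall y, g' y = gM y.
Proof.
move=> H.
have HG := wfun_ax (emor g').
have key : forall t, TDef t -> g' (mkc t) = eval f t.
  apply (@TDE_ind (fun (t : term) (_ : TDef t) => g' (mkc t) = eval f t)
                  (fun (t u : term) (_ : TEq t u) => True)); intros => //.
  - exact: H.
  - exact: (emor_orig g').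
  - by rewrite /= -(xiK_mkc t0) (emor_xi g') H0.
  - rewrite /= -(srcK_mkc t0) (HG.2.1 (mkc t) _).1 ?H0 // dimK_mkc //.
  - rewrite /= -(tgtK_mkc t0) (HG.2.1 (mkc t) _).2 ?H0 // dimK_mkc //.
  - by rewrite /= -(idcK_mkc t0) HG.2.2.1 H0.
  - rewrite /= -(compK_mkc p t0 t) HG.2.2.2 ?H0 ?H1 //.
    by apply/(compK_iff p t t0).
  - rewrite -(mkc_eq t1) H0; exact: (sound_eq f t1).
move=> y; elim/K_ind: y => t Ht.
by rewrite key // /= g_mkc.
Qed.
End Univ.
End Free.

Theorem mainTheorem2 :
  forall C : wcat,
  exists (FC : expansion) (eta : wfunctor C (U FC)),
  forall (E : expansion) (f : wfunctor C (U E)),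
  exists g : expmor FC E,
    (forall x, g (eta x) = f x) /\
    (forall g' : expmor FC E, (forall x, g' (eta x) = f x) ->
       forall y, g' y = g y).
Proof.
move=> C; exists (FC C), (eta C) => E f.
exists (gM f); split; first exact: gM_eta.
exact: gM_unique.
Qed.
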